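(* Let $H$ be a connected graph with $k=|V(H)|>1$ vertices that does not contain two true twins or does not contain two false twins. Then for every $p\in[0,1)$ there is no deterministic algorithm solving the Delayed Connected $H$-Node-Deletion Problem with predictions that has both consistency less than $k-\frac{1}{2-p}(k-1)$ and robustness less than $k+\frac{p}{1-p}$.
   Context: All graphs are finite, simple and undirected. Two distinct vertices are false twins if they have the same open neighborhood, and true twins if they have the same closed neighborhood $N[v]=N(v)\cup\{v\}$. An induced copy of $H$ in $G$ is an induced subgraph isomorphic to $H$; $G$ is $H$-free if it has none. An online graph $G$ has vertices $v_1,\dots,v_n$ revealed one at a time; $G_t=G[\{v_1,\dots,v_t\}]$. Delayed Connected $H$-Node-Deletion Problem with predictions (fixed connected $H$): when $v_t$ is revealed the algorithm receives a bit $u_t(G)\in\{0,1\}$; it must choose sets $S_1\subseteq\dots\subseteq S_n$ with $S_t\subseteq V(G_t)$ and $G_t-S_t$ $H$-free for each $t$, where $S_t$ depends only on $G_t$ and $u_1(G),\dots,u_t(G)$; the cost is $|S_n|$. $\mathrm{OPT}(G)$ is the minimum size of $S\subseteq V(G)$ with $G-S$ $H$-free. The advice is correct if the set of vertices with bit $1$ is a minimum-size such set. An algorithm is $(r,w)$-competitive if there is a constant $\alpha\ge0$ such that for every online graph $G$: for some correct advice its cost is at most $r\cdot\mathrm{OPT}(G)+\alpha$, and for every advice (correct or not) its cost is at most $w\cdot\mathrm{OPT}(G)+\alpha$. Consistency (resp. robustness) is the infimum of such $r$ (resp. $w$). *)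

(* Defs.v *)
From mathcomp Require Import all_boot.
From Stdlib Require Import Reals.

Set Implicit Arguments.
Unset Strict Implicit.
Unset Printing Implicit Defensive.

Definition true_twins (T : finType) (e : rel T) (u v : T) : Prop :=
  u <> v /\ forall z : T, (z == u) || e u z = (z == v) || e v z.

Definition false_twins (T : finType) (e : rel T) (u v : T) : Prop :=
  u <> v /\ forall z : T, e u z = e v z.

(* Online graphs: vertices v_1,...,v_n are represented by 0,...,n-1 in
   reveal order; adj is the (simple, undirected) adjacency relation.
   Only its restriction to {0..n-1} matters. *)
Definition simple_adj (adj : nat -> nat -> bool) : Prop :=
  (forall i j, adj i j = adj j i) /\ (forall i, adj i i = false).

Definition H_free (T : finType) (e : rel T)
    (adj : nat -> nat -> bool) (P : nat -> bool) : Prop :=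
  ~ exists f : T -> nat,
      injective f /\ (forall x, P (f x)) /\
      (forall x y, x <> y -> e x y = adj (f x) (f y)).

Definition trunc_rel (t : nat) (adj : nat -> nat -> bool) : nat -> nat -> bool :=
  fun i j => [&& i < t, j < t & adj i j].
Definition trunc_pred (t : nat) (u : nat -> bool) : nat -> bool :=
  fun i => (i < t) && u i.

(* A deterministic online algorithm: at time t it is given (only) G_t and
   u_1,...,u_t and outputs the set S_t (as a predicate on vertices). *)
Definition algorithm := nat -> (nat -> nat -> bool) -> (nat -> bool) -> (nat -> bool).

Definition alg_out (A : algorithm) (t : nat) (adj : nat -> nat -> bool)
    (u : nat -> bool) : nat -> bool :=
  A t (trunc_rel t adj) (trunc_pred t u).

Definition valid_alg (T : finType) (e : rel T) (A : algorithm) : Prop :=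
  forall (adj : nat -> nat -> bool) (u : nat -> bool), simple_adj adj ->
  forall t, 1 <= t ->
    (forall i, alg_out A t adj u i -> i < t) /\
    (forall i, alg_out A t adj u i -> alg_out A t.+1 adj u i) /\
    H_free e (trunc_rel t adj) (fun i => (i < t) && ~~ alg_out A t adj u i).

Definition cost (A : algorithm) (n : nat) (adj : nat -> nat -> bool)
    (u : nat -> bool) : nat :=
  count (alg_out A n adj u) (iota 0 n).

Definition deletion_set (T : finType) (e : rel T) (n : nat)
    (adj : nat -> nat -> bool) (S : nat -> bool) : Prop :=
  H_free e (trunc_rel n adj) (fun i => (i < n) && ~~ S i).

Definition is_opt (T : finType) (e : rel T) (n : nat)
    (adj : nat -> nat -> bool) (m : nat) : Prop :=
  (exists S, deletion_set e n adj S /\ count S (iota 0 n) = m) /\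
  (forall S, deletion_set e n adj S -> m <= count S (iota 0 n)).

Definition correct_advice (T : finType) (e : rel T) (n : nat)
    (adj : nat -> nat -> bool) (u : nat -> bool) : Prop :=
  deletion_set e n adj u /\ is_opt e n adj (count u (iota 0 n)).

Definition competitive (T : finType) (e : rel T) (A : algorithm) (r w : R) : Prop :=
  exists alpha : R, (0 <= alpha)%R /\
  forall (n : nat) (adj : nat -> nat -> bool), simple_adj adj ->
  forall m, is_opt e n adj m ->
    (exists u, correct_advice e n adj u /\
       (INR (cost A n adj u) <= r * INR m + alpha)%R) /\
    (forall u, (INR (cost A n adj u) <= w * INR m + alpha)%R).

(* Main.v *)
Require Import Defs.
From mathcomp Require Import all_boot zify.
From Stdlib Require Import Reals FunctionalExtensionality Classical Lra Psatz.

Set Implicit Arguments.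
Unset Strict Implicit.
Unset Printing Implicit Defensive.


Definition badj (T : finType) (e : rel T) (tw : bool) (c : nat -> T) : nat -> nat -> bool :=
  fun i j => (i != j) && (e (c i) (c j) || tw && (c i == c j)).

Definition fulldel (T : finType) (c : nat -> T) (n : nat) (S : nat -> bool) (x : T) : bool :=
  all (fun i => (c i != x) || S i) (iota 0 n).

Definition twfree (T : finType) (e : rel T) (tw : bool) : Prop :=
  if tw then forall u v, ~ true_twins e u v else forall u v, ~ false_twins e u v.

Lemma badj_simple (T : finType) (e : rel T) tw c :
  symmetric e -> simple_adj (badj e tw c).
Proof.
move=> es; split=> [i j|i]; rewrite /badj; last by rewrite eqxx.
by rewrite eq_sym es [c j == c i]eq_sym.
Qed.

Lemma hfree_full (T : finType) (e : rel T) tw c n (S : nat -> bool) :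
  H_free e (trunc_rel n (badj e tw c)) (fun i => (i < n) && ~~ S i) ->
  exists x, fulldel c n S x.
Proof.
move=> hf; apply: NNPP => hne; apply: hf.
have hx : forall x, has (fun i => (c i == x) && ~~ S i) (iota 0 n).
  move=> x; apply: contraT; rewrite -all_predC => ha; case: hne; exists x.
  apply/allP => i hi; move/allP: ha => /(_ i hi) /=.
  by rewrite negb_and negbK; case: eqP.
pose f x := nth 0 (filter (fun i => (c i == x) && ~~ S i) (iota 0 n)) 0.
have hf1 : forall x, [/\ c (f x) = x, f x < n & ~~ S (f x)].
  move=> x; have := hx x; rewrite has_filter => hne0.
  have : f x \in filter (fun i => (c i == x) && ~~ S i) (iota 0 n).
    by apply: mem_nth; rewrite lt0n size_eq0.
  by rewrite mem_filter mem_iota add0n => /andP[/andP[/eqP -> ->] /andP[_ ->]].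
exists f; split; [|split].
- by move=> x y hxy; have [<- _ _] := hf1 x; rewrite hxy; have [-> _ _] := hf1 y.
- by move=> x; have [_ -> ->] := hf1 x.
- move=> x y hxy; rewrite /trunc_rel /badj.
  have [cx nx _] := hf1 x; have [cy ny _] := hf1 y.
  rewrite nx ny cx cy /=.
  have -> : (f x != f y) by apply/eqP => h; apply: hxy; rewrite -cx -cy h.
  have -> : (x == y) = false by apply/eqP.
  by rewrite andbF orbF.
Qed.


Lemma full_hfree (T : finType) (e : rel T) tw c n (S : nat -> bool) x :
  irreflexive e -> twfree e tw -> fulldel c n S x ->
  H_free e (trunc_rel n (badj e tw c)) (fun i => (i < n) && ~~ S i).
Proof.
move=> eirr htw hfd [f [finj [fP fadj]]].
have key : forall y w, y <> w ->
    e y w = e (c (f y)) (c (f w)) || tw && (c (f y) == c (f w)).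
  move=> y w hyw; rewrite (fadj _ _ hyw) /trunc_rel /badj.
  have /andP[-> _] := fP y; have /andP[-> _] := fP w.
  have -> // : f y != f w by apply/eqP => /finj.
case: (boolP (injectiveb (fun y => c (f y)))) => [/injectiveP ginj | /injectivePn].
  have [g' _ g'K] := injF_bij ginj.
  have := fP (g' x); rewrite /= => /andP[hlt hS].
  move/allP: hfd => /(_ (f (g' x))); rewrite mem_iota add0n hlt g'K eqxx /=.
  by move=> /(_ isT); rewrite (negbTE hS).
move=> [y [z hyz hc]].
have hyz' : y <> z by apply/eqP.
rewrite /twfree in htw; destruct tw; rewrite ?andTb ?andFb ?orbF in key.
- apply: (htw y z); split=> // w.
  case: (eqVneq w y) => [->|hwy].
    by rewrite /= (key z y (nesym hyz')) /= hc eqxx !orbT.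
  case: (eqVneq w z) => [->|hwz].
    by rewrite /= (key y z hyz') /= hc eqxx !orbT.
  have hyw : y <> w by apply/eqP; rewrite eq_sym.
  have hzw : z <> w by apply/eqP; rewrite eq_sym.
  by rewrite /= (key y w hyw) (key z w hzw) hc.
- apply: (htw y z); split=> // w.
  case: (eqVneq w y) => [->|hwy].
    by rewrite eirr (key z y (nesym hyz')) /= hc eirr.
  case: (eqVneq w z) => [->|hwz].
    by rewrite eirr (key y z hyz') /= hc eirr.
  have hyw : y <> w by apply/eqP; rewrite eq_sym.
  have hzw : z <> w by apply/eqP; rewrite eq_sym.
  by rewrite (key y w hyw) (key z w hzw) hc.
Qed.

Lemma exists_min (P : nat -> Prop) : (exists n, P n) -> exists m, P m /\ forall j, P j -> m <= j.
Proof.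
move=> [n Pn]; elim: n {-2}n (leqnn n) Pn => [|N IH] n hn Pn.
  by exists n; split=> // j _; move: hn; rewrite leqn0 => /eqP ->.
case: (classic (exists j, P j /\ j < n)) => [[j [Pj hj]]|hno].
  by apply: (IH j) => //; rewrite -ltnS (leq_trans hj hn).
exists n; split=> // j Pj; rewrite leqNgt; apply/negP => hj; apply: hno; exists j; by split.
Qed.

Lemma opt_exists (T : finType) (e : rel T) n adj S0 :
  deletion_set e n adj S0 -> exists m, is_opt e n adj m.
Proof.
move=> hS0.
have [m [[S [hS hc]] hmin]] := exists_min (P := fun m => exists S, deletion_set e n adj S /\ count S (iota 0 n) = m) (ex_intro _ _ (ex_intro _ S0 (conj hS0 erefl))).
exists m; split; first by exists S.
by move=> S' hS'; apply: hmin; exists S'.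
Qed.

Lemma opt_unique (T : finType) (e : rel T) n adj m1 m2 :
  is_opt e n adj m1 -> is_opt e n adj m2 -> m1 = m2.
Proof.
move=> [[S1 [h1 c1]] m1l] [[S2 [h2 c2]] m2l].
apply/eqP; rewrite eqn_leq; apply/andP; split; [rewrite -c2; exact: m1l | rewrite -c1; exact: m2l].
Qed.

Lemma fulldel_count (T : finType) (c : nat -> T) n S x :
  fulldel c n S x -> count (fun i => c i == x) (iota 0 n) <= count S (iota 0 n).
Proof.
move=> /allP h; rewrite -!size_filter; apply: uniq_leq_size; first exact/filter_uniq/iota_uniq.
move=> i; rewrite !mem_filter => /andP[hx hi]; rewrite hi andbT.
by have := h i hi; rewrite hx.
Qed.

Lemma fulldel_ind (T : finType) (c : nat -> T) n x : fulldel c n (fun i => c i == x) x.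
Proof. by apply/allP => i _; case: (c i == x). Qed.

Definition bits (T : finType) (A0 : T) (c : nat -> T) : nat -> bool := fun i => c i == A0.

Definition Sout (T : finType) (e : rel T) tw (Alg : algorithm) (A0 : T) t (c : nat -> T) :=
  alg_out Alg t (badj e tw c) (bits A0 c).

Definition step (T : finType) (e : rel T) tw Alg (A0 : T) t (c : nat -> T) : T :=
  if t < #|T| then nth A0 (enum T) t
  else odflt A0 [pick x | fulldel c t (Sout e tw Alg A0 t c) x].

Fixpoint run (T : finType) (e : rel T) tw Alg (A0 : T) n : seq T :=
  match n with
  | 0 => [::]
  | n'.+1 => rcons (run e tw Alg A0 n') (step e tw Alg A0 n' (nth A0 (run e tw Alg A0 n')))
  end.

Definition cr (T : finType) (e : rel T) tw Alg (A0 : T) (i : nat) : T :=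
  nth A0 (run e tw Alg A0 i.+1) i.

Lemma trunc_rel_ext (T : finType) (e : rel T) tw t (c1 c2 : nat -> T) :
  (forall i, i < t -> c1 i = c2 i) ->
  trunc_rel t (badj e tw c1) = trunc_rel t (badj e tw c2).
Proof.
move=> h; apply: functional_extensionality => i; apply: functional_extensionality => j.
rewrite /trunc_rel; case: (boolP (i < t)) => hi //; case: (boolP (j < t)) => hj //.
by rewrite /badj h // (h j).
Qed.

Lemma trunc_pred_ext t (u1 u2 : nat -> bool) :
  (forall i, i < t -> u1 i = u2 i) -> trunc_pred t u1 = trunc_pred t u2.
Proof.
move=> h; apply: functional_extensionality => i; rewrite /trunc_pred.
by case: (boolP (i < t)) => hi //; rewrite h.
Qed.

Lemma Sout_ext (T : finType) (e : rel T) tw Alg A0 t (c1 c2 : nat -> T) :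
  (forall i, i < t -> c1 i = c2 i) -> Sout e tw Alg A0 t c1 = Sout e tw Alg A0 t c2.
Proof.
move=> h; rewrite /Sout /alg_out (trunc_rel_ext e tw h); congr (Alg t _ _).
by apply: trunc_pred_ext => i hi; rewrite /bits h.
Qed.

Lemma fulldel_ext (T : finType) t (c1 c2 : nat -> T) S x :
  (forall i, i < t -> c1 i = c2 i) -> fulldel c1 t S x = fulldel c2 t S x.
Proof.
move=> h; apply: eq_in_all => i; rewrite mem_iota add0n => hi; by rewrite h.
Qed.

Lemma step_ext (T : finType) (e : rel T) tw Alg A0 t (c1 c2 : nat -> T) :
  (forall i, i < t -> c1 i = c2 i) -> step e tw Alg A0 t c1 = step e tw Alg A0 t c2.
Proof.
move=> h; rewrite /step (Sout_ext _ _ _ _ h).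
case: (t < #|T|) => //; congr odflt; apply: eq_pick => x /=; exact: fulldel_ext.
Qed.

Lemma size_run (T : finType) (e : rel T) tw Alg A0 n : size (run e tw Alg A0 n) = n.
Proof. by elim: n => //= n IH; rewrite size_rcons IH. Qed.

Lemma nth_run_succ (T : finType) (e : rel T) tw Alg A0 n i :
  i < n -> nth A0 (run e tw Alg A0 n.+1) i = nth A0 (run e tw Alg A0 n) i.
Proof. by move=> hi; rewrite [run _ _ _ _ n.+1]/= nth_rcons size_run hi. Qed.

Lemma nth_run (T : finType) (e : rel T) tw Alg A0 n i :
  i < n -> nth A0 (run e tw Alg A0 n) i = cr e tw Alg A0 i.
Proof.
elim: n => // n IH.
rewrite ltnS leq_eqVlt => /orP[/eqP -> | hin]; first by [].
by rewrite nth_run_succ // IH.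
Qed.

Lemma cr_step (T : finType) (e : rel T) tw Alg A0 t :
  cr e tw Alg A0 t = step e tw Alg A0 t (cr e tw Alg A0).
Proof.
rewrite /cr [run _ _ _ _ t.+1]/= nth_rcons size_run ltnn eqxx.
by apply: step_ext => i hi; rewrite nth_run.
Qed.

Section Run.
End Run.

Lemma cr_small (T : finType) (e : rel T) tw Alg (A0 : T) t :
  t < #|T| -> cr e tw Alg A0 t = nth A0 (enum T) t.
Proof. by move=> ht; rewrite cr_step /step ht. Qed.

Lemma cr_big (T : finType) (e : rel T) tw Alg (A0 : T) t :
  symmetric e -> valid_alg e Alg -> 0 < #|T| -> #|T| <= t ->
  fulldel (cr e tw Alg A0) t (Sout e tw Alg A0 t (cr e tw Alg A0)) (cr e tw Alg A0 t).
Proof.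
move=> es hv hk ht.
have t1 : 1 <= t by apply: leq_trans ht.
have [_ [_ hf]] := hv (badj e tw (cr e tw Alg A0)) (bits A0 (cr e tw Alg A0)) (badj_simple tw _ es) t t1.
have [x hx] := hfree_full hf.
rewrite [cr _ _ _ _ t]cr_step /step ltnNge ht /=.
case: pickP => [y hy //|hn]; by rewrite hn in hx.
Qed.

Lemma Sout_mono (T : finType) (e : rel T) tw Alg (A0 : T) t i :
  symmetric e -> valid_alg e Alg -> 1 <= t ->
  Sout e tw Alg A0 t (cr e tw Alg A0) i -> Sout e tw Alg A0 t.+1 (cr e tw Alg A0) i.
Proof.
move=> es hv t1.
by have [_ [hm _]] := hv (badj e tw (cr e tw Alg A0)) (bits A0 (cr e tw Alg A0)) (badj_simple tw _ es) t t1; apply: hm.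
Qed.

Lemma inv_run (T : finType) (e : rel T) tw Alg (A0 : T) t :
  symmetric e -> valid_alg e Alg -> 0 < #|T| -> #|T| <= t ->
  forall i j, i < j -> j < t -> ~~ Sout e tw Alg A0 t (cr e tw Alg A0) i ->
    cr e tw Alg A0 j != cr e tw Alg A0 i.
Proof.
move=> es hv hk; elim: t => [|t IH]; first by rewrite leqn0 => /eqP h; rewrite h in hk.
rewrite leq_eqVlt => /orP[/eqP hkt|hkt].
  move=> i j hij hj _.
  have hjk : j < #|T| by rewrite hkt.
  have hik : i < #|T| by apply: ltn_trans hij hjk.
  rewrite !cr_small // nth_uniq ?enum_uniq -?cardT //.
  by rewrite neq_ltn hij orbT.
have ht : #|T| <= t by [].
move=> i j hij; rewrite ltnS leq_eqVlt => /orP[/eqP hjt'|hjt] hS.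
- subst j; have := cr_big tw A0 es hv hk ht => /allP /(_ i).
  rewrite mem_iota add0n hij => /(_ isT).
  have hS' : ~~ Sout e tw Alg A0 t (cr e tw Alg A0) i.
    apply: contra hS; apply: Sout_mono => //; exact: leq_trans hk ht.
  by rewrite (negbTE hS') orbF eq_sym.
- apply: IH => //; apply: contra hS; apply: Sout_mono => //; exact: leq_trans hk ht.
Qed.

Lemma cost_run (T : finType) (e : rel T) tw Alg (A0 : T) t :
  symmetric e -> valid_alg e Alg -> 0 < #|T| -> #|T| <= t ->
  t <= count (Sout e tw Alg A0 t (cr e tw Alg A0)) (iota 0 t) + #|T|.
Proof.
move=> es hv hk ht.
set S := Sout e tw Alg A0 t (cr e tw Alg A0).
have hU : size (filter (predC S) (iota 0 t)) <= #|T|.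
  rewrite -(size_map (cr e tw Alg A0)).
  have hu : uniq (map (cr e tw Alg A0) (filter (predC S) (iota 0 t))).
    rewrite map_inj_in_uniq ?filter_uniq ?iota_uniq //.
    move=> i j; rewrite !mem_filter !mem_iota !add0n /= => /andP[hSi hi] /andP[hSj hj] hc.
    case: (ltngtP i j) => // hij.
      by have := inv_run (tw:=tw) (A0:=A0) es hv hk ht hij hj hSi; rewrite hc eqxx.
    by have := inv_run (tw:=tw) (A0:=A0) es hv hk ht hij hi hSj; rewrite hc eqxx.
  by rewrite -(card_uniqP hu) max_card.
rewrite size_filter in hU.
have e1 := count_predC S (iota 0 t); rewrite size_iota in e1.
by rewrite -{1}e1 leq_add2l.
Qed.

Lemma count_in_le (s : seq nat) (p1 p2 : pred nat) :
  (forall i, i \in s -> p1 i -> p2 i) -> count p1 s <= count p2 s.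
Proof.
elim: s => //= y s IH h.
apply: leq_add; last by apply: IH => i hi; apply: h; rewrite inE hi orbT.
by case: (boolP (p1 y)) => // /(h y (mem_head _ _)) ->.
Qed.

Lemma count_in_eq (s : seq nat) (p1 p2 : pred nat) :
  (forall i, i \in s -> p1 i -> p2 i) -> count p2 s <= count p1 s ->
  forall i, i \in s -> p2 i -> p1 i.
Proof.
elim: s => //= y s IH h hc i.
have hs : forall i, i \in s -> p1 i -> p2 i by move=> j hj; apply: h; rewrite inE hj orbT.
have hle := count_in_le hs.
have hy : p1 y -> p2 y by apply: h; exact: mem_head.
have hc' : count p2 s <= count p1 s.
  move: hc hy hle; case: (p1 y); case: (p2 y) => //= hc hy hle'; lia.
rewrite inE => /orP[/eqP ->|hi].
  move=> hp2; apply: contraT => hp1; move: hc; rewrite (negbTE hp1) hp2 /= => h1.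
  lia.
exact: IH.
Qed.

Lemma alg_mono (T : finType) (e : rel T) Alg adj u t n :
  valid_alg e Alg -> simple_adj adj -> 1 <= t -> t <= n ->
  forall i, alg_out Alg t adj u i -> alg_out Alg n adj u i.
Proof.
move=> hv hs ht; elim: n => [|n IH]; first by rewrite leqn0 => /eqP h; rewrite h in ht.
rewrite leq_eqVlt => /orP[/eqP <- //|hn] i hi.
have [_ [hm _]] := hv adj u hs n (leq_trans ht hn).
by apply: hm; apply: IH.
Qed.

Lemma cost_mono (T : finType) (e : rel T) Alg adj u t n :
  valid_alg e Alg -> simple_adj adj -> 1 <= t -> t <= n ->
  count (alg_out Alg t adj u) (iota 0 t) <= count (alg_out Alg n adj u) (iota 0 n).
Proof.
move=> hv hs ht htn.
apply: (@leq_trans (count (alg_out Alg n adj u) (iota 0 t))).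
  by apply: sub_count => i; apply: (alg_mono hv hs ht htn).
by rewrite -(subnKC htn) iotaD count_cat leq_addr.
Qed.

Definition comp_prop (T : finType) (e : rel T) (A : algorithm) (r w alpha : R) : Prop :=
  forall (n : nat) (adj : nat -> nat -> bool), simple_adj adj ->
  forall m, is_opt e n adj m ->
    (exists u, correct_advice e n adj u /\
       (INR (cost A n adj u) <= r * INR m + alpha)%R) /\
    (forall u, (INR (cost A n adj u) <= w * INR m + alpha)%R).

Lemma robust_bound (T : finType) (e : rel T) tw Alg (A0 : T) t r w al :
  symmetric e -> irreflexive e -> twfree e tw -> comp_prop e Alg r w al ->
  exists m, (forall x, m <= count (fun i => cr e tw Alg A0 i == x) (iota 0 t)) /\
   (INR (count (Sout e tw Alg A0 t (cr e tw Alg A0)) (iota 0 t)) <= w * INR m + al)%R.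
Proof.
move=> es eirr htw hc.
set c := cr e tw Alg A0.
have hd : forall x, deletion_set e t (badj e tw c) (fun i => c i == x).
  by move=> x; apply: (full_hfree (x:=x) eirr htw); apply: fulldel_ind.
have [m hm] := opt_exists (hd A0).
exists m; split.
  by move=> x; case: hm => _ /(_ _ (hd x)).
by have [_ /(_ (bits A0 c))] := hc t _ (badj_simple tw c es) m hm.
Qed.

Lemma cons_bound (T : finType) (e : rel T) tw Alg (A0 : T) t r w al :
  symmetric e -> irreflexive e -> twfree e tw -> valid_alg e Alg ->
  comp_prop e Alg r w al -> 1 <= t ->
  (INR (count (Sout e tw Alg A0 t (cr e tw Alg A0)) (iota 0 t)) <=
     r * INR (count (fun i => cr e tw Alg A0 i == A0) (iota 0 t)) + al)%R.
Proof.
move=> es eirr htw hv hc ht.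
set c := cr e tw Alg A0.
set a := count (fun i => c i == A0) (iota 0 t).
set L0 := [seq x <- enum T | x != A0].
set l := flatten (nseq a.+1 L0).
set c' := fun i => if i < t then c i else nth A0 l (i - t).
set n' := t + size l.
set sz := fun x => count (fun i => c' i == x) (iota 0 n').
have hsz : forall x, sz x = count (fun i => c i == x) (iota 0 t) + count (pred1 x) l.
  move=> x; rewrite /sz /n' iotaD count_cat add0n; congr (_ + _).
    by apply: eq_in_count => i; rewrite mem_iota add0n /= /c' => ->.
  rewrite -[in RHS](mkseq_nth A0 l) /mkseq count_map.
  rewrite -{1}(addn0 t) iotaDl count_map.
  apply: eq_count => j /=; rewrite /c' ltnNge leq_addr /= addKn //.
have hL0 : forall x, count (pred1 x) L0 = (x != A0).
  move=> x; rewrite count_uniq_mem /L0; first by rewrite mem_filter mem_enum andbT.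
  by rewrite filter_uniq // enum_uniq.
have hl : forall x, count (pred1 x) l = (x != A0) * a.+1.
  by move=> y; rewrite /l count_flatten map_nseq sumn_nseq hL0.
have hszA : sz A0 = a by rewrite hsz hl eqxx mul0n addn0.
have hszx : forall x, x != A0 -> a < sz x.
  by move=> x hx; rewrite hsz hl hx mul1n ltn_addl.
set adj' := badj e tw c'.
have hs' : simple_adj adj' by exact: badj_simple.
have hdel : forall S, deletion_set e n' adj' S ->
    exists x, fulldel c' n' S x /\ sz x <= count S (iota 0 n').
  move=> S hS; have [x hx] := hfree_full hS; exists x; split=> //.
  exact: fulldel_count.
have hopt : is_opt e n' adj' a.
  split.
    exists (fun i => c' i == A0); split; last by rewrite -hszA.
    by apply: (full_hfree (x:=A0) eirr htw); apply: fulldel_ind.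
  move=> S hS; have [x [_ hx]] := hdel S hS.
  apply: leq_trans hx; case: (eqVneq x A0) => [->|hxA]; first by rewrite hszA.
  exact: ltnW (hszx x hxA).
have [[u [[hud huo] hcost]] _] := hc n' adj' hs' a hopt.
have hcu : count u (iota 0 n') = a by apply: opt_unique huo hopt.
have [x [hfx hszu]] := hdel u hud.
have hxA : x = A0.
  apply/eqP; apply: contraT => hxA; move: (leq_trans (hszx x hxA) hszu).
  by rewrite hcu ltnn.
subst x.
have hsub : forall i, i \in iota 0 n' -> (c' i == A0) -> u i.
  move=> i hi hci; move/allP: hfx => /(_ i hi); by rewrite hci.
have hsub2 := count_in_eq hsub (eq_leq (etrans hcu (esym hszA))).
have hagree : forall i, i < t -> u i = bits A0 c i.
  move=> i hi; have hin : i \in iota 0 n' by rewrite mem_iota add0n (leq_trans hi) ?leq_addr.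
  have hci : c' i = c i by rewrite /c' hi.
  apply/idP/idP => [hu|hb]; first by have := hsub2 i hin hu; rewrite hci.
  by apply: hsub => //; rewrite hci.
have hout : alg_out Alg t adj' u = Sout e tw Alg A0 t c.
  rewrite /Sout /alg_out (trunc_pred_ext hagree) /adj'.
  by rewrite (@trunc_rel_ext _ e tw t c' c) // => i hi; rewrite /c' hi.
have hmono := cost_mono u hv hs' ht (leq_addr (size l) t).
rewrite hout -/n' in hmono.
apply: Rle_trans hcost; apply: le_INR; apply/leP; exact: hmono.
Qed.

Lemma sum_sizes (T : finType) (c : nat -> T) (s : seq nat) :
  \sum_(x : T) count (fun i => c i == x) s = size s.
Proof.
elim: s => [|y s IH] /=; first by rewrite big1.
rewrite big_split /= IH (bigD1 (c y)) //= eqxx big1 ?addn0 // => x hx.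
by rewrite eq_sym (negbTE hx).
Qed.

Lemma sizes_ineq (T : finType) (c : nat -> T) t (A0 : T) m :
  (forall x, m <= count (fun i => c i == x) (iota 0 t)) ->
  count (fun i => c i == A0) (iota 0 t) + #|T| * m <= t + m.
Proof.
move=> hm.
have := sum_sizes c (iota 0 t); rewrite size_iota (bigD1 A0) //= => hsum.
have hle : \sum_(x | x != A0) m <= \sum_(x | x != A0) count (fun i => c i == x) (iota 0 t).
  by apply: leq_sum => x _; apply: hm.
rewrite sum_nat_const cardC1 in hle.
have hk : 0 < #|T| by apply/card_gt0P; exists A0.
move: hle hsum hk; set S := \sum_(_ | _) _; set a := count _ _.
case: #|T| => [|k] h1 h2 h3 //; rewrite /= in h1; rewrite mulSn; lia.
Qed.

Section RealPart.
Local Open Scope R_scope.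

Lemma final_real (K r w p al : R) : 2 <= K -> 0 <= p -> p < 1 -> 0 <= al ->
  r < K - (K-1)/(2-p) -> w < K + p/(1-p) ->
  exists B, forall Tt a M C, 0 <= a -> 0 <= M -> a + K*M <= Tt + M ->
    Tt <= C + K -> C <= w * M + al -> C <= r * a + al -> Tt <= B.
Proof.
move=> hK hp0 hp1 hal hr hw.
set X := Rmax (r-1) 0. set Y := Rmax (w-K+1) 0.
have hX0 : 0 <= X by apply: Rmax_r.
have hY0 : 0 <= Y by apply: Rmax_r.
have h1 : (r - 1) * (2 - p) < (K-1)*(1-p).
  have e1 : (K-1)/(2-p) * (2-p) = K-1 by field; lra.
  have : r * (2-p) < (K - (K-1)/(2-p)) * (2-p) by apply: Rmult_lt_compat_r; lra.
  nra.
have h2 : (w - K + 1) * (1 - p) < 1.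
  have e1 : p/(1-p) * (1-p) = p by field; lra.
  have : w * (1-p) < (K + p/(1-p)) * (1-p) by apply: Rmult_lt_compat_r; lra.
  nra.
have hXY : X * Y < K - 1.
  rewrite /X /Y.
  destruct (Rle_dec (r-1) 0) as [a1|a1].
    rewrite (Rmax_right (r-1)) // Rmult_0_l; lra.
  rewrite (Rmax_left (r-1)); last lra.
  destruct (Rle_dec (w-K+1) 0) as [b1|b1].
    rewrite (Rmax_right (w-K+1)) // Rmult_0_r; lra.
  rewrite (Rmax_left (w-K+1)); last lra.
  have hprod : (r-1)*(2-p)*((w-K+1)*(1-p)) < (K-1)*(1-p) * 1.
    apply: Rmult_le_0_lt_compat; nra.
  nra.
set D0 := K - 1 - X * Y.
have hD : 0 < D0 by rewrite /D0; lra.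
set Cst := Rmax r 1 * (al + K) / D0.
exists (K + al + Rmax w 0 * Cst).
move=> Tt a M C ha hM hs hT hR hC.
have hDM : D0 * M <= Rmax r 1 * (al + K).
  rewrite /D0 /X /Y.
  destruct (Rle_dec (r-1) 0) as [a1|a1].
    rewrite (Rmax_right (r-1)); last lra.
    rewrite (Rmax_right r 1); last lra.
    rewrite Rmult_0_l; nra.
  rewrite (Rmax_left (r-1)); last lra.
  rewrite (Rmax_left r 1); last lra.
  destruct (Rle_dec (w-K+1) 0) as [b1|b1].
    rewrite (Rmax_right (w-K+1)); last lra.
    have p1 : (w-K+1)*M <= 0 by nra.
    have ha2 : a <= al + K by nra.
    have p2 : (r-1)*a <= (r-1)*(al+K) by apply: Rmult_le_compat_l; lra.
    rewrite Rmult_0_r; nra.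
  rewrite (Rmax_left (w-K+1)); last lra.
  have ha2 : a <= (w-K+1)*M + al + K by nra.
  have p2 : (r-1)*a <= (r-1)*((w-K+1)*M + al + K) by apply: Rmult_le_compat_l; lra.
  nra.
have hMC : M <= Cst.
  rewrite /Cst; apply: (Rmult_le_reg_l D0) => //.
  have -> : D0 * (Rmax r 1 * (al + K) / D0) = Rmax r 1 * (al + K) by field; lra.
  done.
have hw0 : w * M <= Rmax w 0 * Cst.
  destruct (Rle_dec w 0) as [c1|c1].
    rewrite Rmax_right //; nra.
  rewrite Rmax_left; [nra|lra].
lra.
Qed.
End RealPart.

Theorem mainTheorem7 (T : finType) (e : rel T)
  (e_sym : symmetric e) (e_irr : irreflexive e)
  (H_conn : forall x y : T, connect e x y)
  (k_gt1 : 1 < #|T|)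
  (twins : (forall u v : T, ~ true_twins e u v) \/
           (forall u v : T, ~ false_twins e u v))
  (p : R) (p_ge0 : (0 <= p)%R) (p_lt1 : (p < 1)%R) :
  ~ exists (A : algorithm) (r w : R),
      valid_alg e A /\ competitive e A r w /\
      (r < INR #|T| - (INR #|T| - 1) / (2 - p))%R /\
      (w < INR #|T| + p / (1 - p))%R.
Proof.
move=> [Alg [r [w [hv [[al [hal hcomp]] [hr hw]]]]]].
have [tw htw] : exists tw, twfree e tw by case: twins => h; [exists true | exists false].
have hk0 : 0 < #|T| by apply: ltnW.
have /card_gt0P [A0 _] := hk0.
have hK2 : (2 <= INR #|T|)%R.
  have := le_INR 2 #|T| (elimT leP k_gt1); rewrite /=; lra.
have [B hB] := final_real hK2 p_ge0 p_lt1 hal hr hw.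
have [t0 ht0] := INR_unbounded B.
set t := maxn t0 #|T|.
have ht : #|T| <= t by rewrite leq_maxr.
have htB : (B < INR t)%R.
  apply: Rlt_le_trans ht0 _; apply: le_INR; apply/leP; exact: leq_maxl.
have t1 : 1 <= t by apply: leq_trans ht.
have [m [hm hrob]] := robust_bound (tw:=tw) A0 t e_sym e_irr htw hcomp.
have hcons := cons_bound (tw:=tw) A0 e_sym e_irr htw hv hcomp t1.
have hcost := cost_run tw A0 e_sym hv hk0 ht.
have hsz := sizes_ineq A0 hm.
move/leP/le_INR: hcost; rewrite plus_INR => hcost.
move/leP/le_INR: hsz; rewrite !plus_INR mult_INR => hsz.
have := hB (INR t) _ (INR m) _ (pos_INR _) (pos_INR _) hsz hcost hrob hcons.
lra.
Qed.
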